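(* Let $\mathcal N$ be a normal network on $X$ with $|X|\ge 3$, and let $\mathcal R$ be the set of triples displayed by $\mathcal N$. Let $\{a,b\}\subseteq X$ with $a\neq b$. Then $\{a,b\}$ is a cherry of $\mathcal N$ if and only if the following holds: whenever $xy|z\in\mathcal R$ and $\{a,b\}\subseteq\{x,y,z\}$, we have $\{a,b\}=\{x,y\}$.
   Context: A (rooted binary) phylogenetic network on $X$ is a rooted acyclic digraph without parallel arcs whose root has in-degree $0$ and out-degree $2$, whose out-degree-$0$ vertices (leaves) have in-degree $1$ and form the set $X$, and whose other vertices are tree vertices (in-degree $1$, out-degree $2$) or reticulations (in-degree $2$, out-degree $1$). A reticulation arc $(u,v)$ (arc into a reticulation) is a shortcut if there is another directed path from $u$ to $v$. The network is tree-child if every non-leaf vertex has a child that is a tree vertex or a leaf, and normal if it is tree-child without shortcuts. For a leaf $x$, $p_x$ denotes its parent; $\{a,b\}$ is a cherry if $p_a=p_b$. A triple $xy|z$ is the rooted binary phylogenetic tree on $\{x,y,z\}$ in which $x,y$ share a parent (so $xy|z=yx|z$). The network displays a phylogenetic tree $\mathcal T$ on a subset of $X$ if $\mathcal T$ can be obtained from the network by deleting arcs and vertices and suppressing vertices of in-degree one and out-degree one. *)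

(* Defs.v *)
From mathcomp Require Import all_boot.
Set Implicit Arguments. Unset Strict Implicit. Unset Printing Implicit Defensive.

(* A directed graph is given by a finite vertex type V and an arc relation
   E : rel V (so there are no parallel arcs by construction). *)
Section Networks.
Variables (V : finType) (E : rel V).

Definition indeg (v : V) : nat := #|[set u | E u v]|.
Definition outdeg (v : V) : nat := #|[set w | E v w]|.

Definition is_root (v : V) : bool := (indeg v == 0) && (outdeg v == 2).
Definition is_leaf (v : V) : bool := (indeg v == 1) && (outdeg v == 0).
Definition is_tree_vertex (v : V) : bool := (indeg v == 1) && (outdeg v == 2).
Definition is_reticulation (v : V) : bool := (indeg v == 2) && (outdeg v == 1).

(* The leaf set X: the out-degree-0 vertices (leaves are identified with
   their labels). *)
Definition leaves : {set V} := [set v | outdeg v == 0].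

(* A directed path from u to v with vertex sequence u :: p. *)
Definition dpath (u v : V) (p : seq V) : bool := path E u p && (last u p == v).

Definition acyclic : Prop :=
  forall (v : V) (p : seq V), dpath v v p -> p = [::].

Definition phylo_network : Prop :=
  acyclic /\
  exists r : V, is_root r /\
    forall v : V, v != r ->
      [|| is_leaf v, is_tree_vertex v | is_reticulation v].

Definition tree_child : Prop :=
  forall v : V, ~~ is_leaf v ->
    exists w : V, E v w && (is_tree_vertex w || is_leaf w).

(* The reticulation arc (u,v) is a shortcut if there is another directed
   path from u to v (i.e. one different from the arc itself). *)
Definition shortcut (u v : V) : Prop :=
  [/\ E u v, is_reticulation v &
      exists p : seq V, dpath u v p /\ p != [:: v]].

Definition normal_network : Prop :=
  phylo_network /\ tree_child /\ forall u v : V, ~ shortcut u v.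

(* The network displays the triple xy|z: some subgraph (obtained by deleting
   arcs and vertices) is a subdivision of xy|z, i.e. suppressing its
   in-degree-1/out-degree-1 vertices yields xy|z.  Such a subgraph consists
   of a vertex r' (its root), a vertex u (the parent of the cherry x,y), and
   nontrivial directed paths r'->u, r'->z, u->x, u->y that are internally
   vertex-disjoint. *)
Definition displays_triple (x y z : V) : Prop :=
  [/\ x \in leaves, y \in leaves, z \in leaves &
      [/\ x != y, x != z & y != z]] /\
  exists (r' u : V) (p1 p2 p3 p4 : seq V),
    [/\ dpath r' u p1, dpath r' z p2, dpath u x p3 & dpath u y p4] /\
    [/\ p1 != [::], p2 != [::], p3 != [::] & p4 != [::]] /\
    (forall w, w \in r' :: p1 -> w \in r' :: p2 -> w = r') /\
    (forall w, w \in u :: p3 -> w \in u :: p4 -> w = u) /\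
    (forall w, w \in r' :: p1 -> w \in u :: p3 -> w = u) /\
    (forall w, w \in r' :: p1 -> w \in u :: p4 -> w = u) /\
    (forall w, w \in r' :: p2 -> w \notin u :: p3) /\
    (forall w, w \in r' :: p2 -> w \notin u :: p4).

Definition cherry (a b : V) : Prop := exists p : V, E p a && E p b.

End Networks.

(* Main.v *)
Require Import Defs.
From mathcomp Require Import all_boot zify.
Set Implicit Arguments. Unset Strict Implicit. Unset Printing Implicit Defensive.

Section Gen.
Variables (V : finType) (E : rel V).
Hypothesis acyc : acyclic E.

Lemma mem_last_nil (x : V) s : s != [::] -> last x s \in s.
Proof. by case/lastP: s => // s v _; rewrite last_rcons mem_rcons mem_head. Qed.

Lemma noloop u p : path E u p -> u \notin p.
Proof.
move=> hp; apply/negP => up.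
case/splitPr: up hp => s1 s2; rewrite cat_path /= => /and3P[h1 h2 _].
have := @acyc u (rcons s1 u).
rewrite /dpath rcons_path h1 h2 last_rcons eqxx => /(_ isT).
by case: s1 {h1 h2}.
Qed.

Lemma pred_mem x s y : path E x s -> y \in s -> exists2 y', y' \in x :: s & E y' y.
Proof.
move=> hp ys; case/splitPr: ys hp => s1 s2; rewrite cat_path /= => /and3P[_ h _].
exists (last x s1) => //.
have := mem_last x s1; rewrite !inE mem_cat => /orP[->//|->]; by rewrite orbT.
Qed.

Lemma pred_last x s : path E x s -> s != [::] -> exists2 y', y' \in x :: s & E y' (last x s).
Proof. move=> hp ne; apply: pred_mem => //; exact: mem_last_nil. Qed.

Lemma conn_mem_last x s w : path E x s -> w \in x :: s -> connect E w (last x s).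
Proof.
move=> hp; rewrite inE => /predU1P[->|ws]; first by apply/connectP; exists s.
case/splitPr: ws hp => s1 s2; rewrite cat_path last_cat /= => /and3P[_ _ h].
by apply/connectP; exists s2.
Qed.

Lemma conn_mem_first x s w : path E x s -> w \in x :: s -> connect E x w.
Proof.
move=> hp; rewrite inE => /predU1P[->//|ws].
case/splitPr: ws hp => s1 s2; rewrite cat_path /= => /and3P[h1 h2 _].
by apply/connectP; exists (rcons s1 w); rewrite ?rcons_path ?h1 ?h2 ?last_rcons.
Qed.

Lemma conn_antisym x y : connect E x y -> connect E y x -> x = y.
Proof.
move=> /connectP[p hp ->] /connectP[q hq eq].
have := @acyc x (p ++ q). rewrite /dpath cat_path hp hq last_cat -eq eqxx => /(_ isT).
by case: p {hp eq hq}.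
Qed.

Lemma no_self v : E v v = false.
Proof.
apply/negP => h; have := @acyc v [:: v]; by rewrite /dpath /= h eqxx => /(_ isT).
Qed.

Lemma arc_back v w : E v w -> connect E w v -> False.
Proof.
move=> h c; have e := conn_antisym (connect1 h) c; subst w; by rewrite no_self in h.
Qed.

Lemma pred_conn v y : connect E v y -> v != y -> exists2 y', E y' y & connect E v y'.
Proof.
move=> /connectP[p hp ->] ne.
have pn : p != [::] by case: p {hp} ne => //=; rewrite eqxx.
have [y' ym hy] := pred_last hp pn.
by exists y' => //; apply: conn_mem_first hp ym.
Qed.

Lemma leaf_noarc z w : z \in leaves E -> E z w = false.
Proof.
rewrite inE /outdeg cards_eq0 => /eqP S; apply/negP => h.
have : w \in [set t | E z t] by rewrite inE.
by rewrite S inE.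
Qed.

Lemma neq_leaf v w x : E v w -> x \in leaves E -> v != x.
Proof. by move=> h lx; apply/eqP => e; subst; rewrite leaf_noarc in h. Qed.

Lemma leaf_conn z w : z \in leaves E -> connect E z w -> w = z.
Proof.
move=> lz /connectP[[|v p] /= hp ->] //.
by case/andP: hp; rewrite leaf_noarc.
Qed.

Lemma disj_paths r0 u z : connect E r0 u -> connect E r0 z ->
  exists r' p1 p2, [/\ dpath E r' u p1, dpath E r' z p2 &
     forall w, w \in r' :: p1 -> w \in r' :: p2 -> w = r'].
Proof.
move=> /connectP[P1 h1 e1] /connectP[P2 h2 e2].
move: {2}(size P1 + size P2).+1 (ltnSn (size P1 + size P2)) => n.
elim: n r0 P1 P2 h1 e1 h2 e2 => // n IH r0 P1 P2 h1 e1 h2 e2 lt.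
case: (boolP (has (mem P2) P1)) => [/hasP[w w1 w2]|nh].
- move: lt; case/splitPr: w1 h1 e1 => s1 s1'; rewrite cat_path last_cat /= => /and3P[_ _ h1'] e1.
  move: e2 h2; case/splitPr: w2 => s2 s2'; rewrite cat_path last_cat /= => e2 /and3P[_ _ h2'] lt.
  apply: (IH w s1' s2') => //. rewrite !size_cat /= in lt. lia.
- exists r0, P1, P2; split; [by rewrite /dpath h1 -e1 eqxx|by rewrite /dpath h2 -e2 eqxx|].
  move=> w; rewrite !inE => /predU1P[->//|w1] /predU1P[->//|w2].
  by move/hasP: nh; case; exists w.
Qed.

Lemma leaf_below v : exists c p, dpath E v c p /\ c \in leaves E.
Proof.
move: {2}#|[set w | connect E v w]|.+1 (ltnSn #|[set w | connect E v w]|) => n.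
elim: n v => // n IH v lt.
case: (boolP (outdeg E v == 0)) => [h|].
- exists v, [::]; split; [by rewrite /dpath /= eqxx | by rewrite inE].
- rewrite /outdeg cards_eq0 => /set0Pn[w]; rewrite inE => hw.
  have sub : [set t | connect E w t] \proper [set t | connect E v t].
    apply/properP; split.
      apply/subsetP => t; rewrite !inE => ht; exact: connect_trans (connect1 hw) ht.
    exists v; rewrite !inE ?connect0 //. apply/negP => hwv; exact: arc_back hw hwv.
  have lw : #|[set t | connect E w t]| < n by have := proper_card sub; lia.
  have [c [p [dp lc]]] := IH w lw.
  exists c, (w :: p); split => //. by move: dp; rewrite /dpath /= hw.
Qed.

Lemma display_lemma r0 u x y z p3 p4 :
  connect E r0 u -> connect E r0 z ->
  dpath E u x p3 -> dpath E u y p4 -> p3 != [::] -> p4 != [::] ->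
  (forall w, w \in p3 -> w \notin p4) ->
  x \in leaves E -> y \in leaves E -> z \in leaves E -> ~~ connect E u z ->
  displays_triple E x y z.
Proof.
move=> c1 c2 d3 d4 n3 n4 dj lx ly lz ncz.
have [r' [p1 [p2 [d1 d2 dj12]]]] := disj_paths c1 c2.
move: (d1) (d2) (d3) (d4) => /andP[h1 /eqP e1] /andP[h2 /eqP e2] /andP[h3 /eqP e3] /andP[h4 /eqP e4].
have cux : connect E u x by apply/connectP; exists p3.
have cuy : connect E u y by apply/connectP; exists p4.
have xp3 : x \in p3 by rewrite -e3 mem_last_nil.
have yp4 : y \in p4 by rewrite -e4 mem_last_nil.
have nxy : x != y by apply/eqP => e; have := dj _ xp3; rewrite e yp4.
have nxz : x != z by apply/eqP => e; move: ncz; rewrite -e cux.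
have nyz : y != z by apply/eqP => e; move: ncz; rewrite -e cuy.
split; first by split.
exists r', u, p1, p2, p3, p4; split; first by split.
split.
  split => //.
  - apply/eqP => e; move: e1; rewrite e /= => e1.
    by move/connectP: ncz; apply; exists p2; rewrite -?e1.
  - apply/eqP => e; move: e2; rewrite e /= => e2.
    have cu : connect E z u by apply/connectP; exists p1; rewrite -?e2.
    by rewrite (leaf_conn lz cu) connect0 in ncz.
split => //.
split.
  move=> w; rewrite !inE => /predU1P[->//|w3] /predU1P[->//|w4].
  by have := dj _ w3; rewrite w4.
have anc1 : forall w, w \in r' :: p1 -> connect E w u.
  by move=> w wm; rewrite -e1; apply: conn_mem_last.
have anc2 : forall w, w \in r' :: p2 -> connect E w z.
  by move=> w wm; rewrite -e2; apply: conn_mem_last.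
have desc3 : forall w, w \in u :: p3 -> connect E u w by move=> w; apply: conn_mem_first.
have desc4 : forall w, w \in u :: p4 -> connect E u w by move=> w; apply: conn_mem_first.
split; first by move=> w a b; apply: conn_antisym (anc1 _ a) (desc3 _ b).
split; first by move=> w a b; apply: conn_antisym (anc1 _ a) (desc4 _ b).
split.
  move=> w a; apply/negP => b; move: ncz; rewrite (connect_trans (desc3 _ b) (anc2 _ a)) //.
move=> w a; apply/negP => b; move: ncz; rewrite (connect_trans (desc4 _ b) (anc2 _ a)) //.
Qed.

End Gen.


Lemma card_le1_eq (T : finType) (A : {set T}) x y : #|A| <= 1 -> x \in A -> y \in A -> x = y.
Proof.
move=> hA xA yA; apply/eqP; apply/negPn/negP => nxy.
have yA' : y \in A :\ x by rewrite in_setD1 eq_sym nxy yA.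
have := cardsD1 x A; rewrite xA.
have : 0 < #|A :\ x| by apply/card_gt0P; exists y.
lia.
Qed.

Lemma card_le2_3 (T : finType) (A : {set T}) x y z : #|A| <= 2 ->
  x \in A -> y \in A -> z \in A -> x != y -> x != z -> y != z -> False.
Proof.
move=> hA xA yA zA nxy nxz nyz.
have yA' : y \in A :\ x by rewrite in_setD1 eq_sym nxy yA.
have zA' : z \in A :\ x by rewrite in_setD1 eq_sym nxz zA.
have h : #|A :\ x| <= 1 by have := cardsD1 x A; rewrite xA; lia.
by move/eqP: nyz; apply; apply: card_le1_eq h yA' zA'.
Qed.

Lemma card2_other (T : finType) (A : {set T}) x : #|A| = 2 -> x \in A ->
  exists y, y \in A /\ y != x.
Proof.
move=> hA xA.
have : 0 < #|A :\ x| by have := cardsD1 x A; rewrite xA; lia.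
by move/card_gt0P => [y]; rewrite in_setD1 => /andP[? ?]; exists y.
Qed.

Section Main.
Variables (V : finType) (E : rel V).
Hypothesis acyc : acyclic E.
Variable r : V.
Hypothesis rootr : is_root E r.
Hypothesis cls : forall v : V, v != r ->
      [|| is_leaf E v, is_tree_vertex E v | is_reticulation E v].
Hypothesis tc : tree_child E.
Hypothesis nsc : forall u v : V, ~ shortcut E u v.

Lemma outdeg_r : outdeg E r = 2.
Proof. by case/andP: rootr => _ /eqP. Qed.

Lemma outdeg_le2 v : outdeg E v <= 2.
Proof.
case: (eqVneq v r) => [->|nv]; first by rewrite outdeg_r.
case/or3P: (cls nv) => /andP[_ /eqP ->] //.
Qed.

Lemma indeg_pos v : v != r -> 0 < indeg E v.
Proof. by move=> nv; case/or3P: (cls nv) => /andP[/eqP -> _]. Qed.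

Lemma nonleaf_type v : 0 < outdeg E v -> outdeg E v = 2 \/ is_reticulation E v.
Proof.
move=> h; case: (eqVneq v r) => [->|nv]; first by left; rewrite outdeg_r.
case/or3P: (cls nv) => hv.
- by case/andP: hv => _ /eqP e; rewrite e in h.
- by left; case/andP: hv => _ /eqP.
- by right.
Qed.

Lemma leaf_indeg a : a \in leaves E -> indeg E a = 1.
Proof.
move=> la; have o : outdeg E a = 0 by move: la; rewrite inE => /eqP.
have nr : a != r by apply/eqP => e; move: o; rewrite e outdeg_r.
case/or3P: (cls nr) => /andP[/eqP i /eqP o'] //; by rewrite o in o'.
Qed.

Lemma parent_leaf a s s' : a \in leaves E -> E s a -> E s' a -> s = s'.
Proof.
move=> la h h'; apply: (@card_le1_eq _ [set u | E u a]); rewrite ?inE //.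
by have := leaf_indeg la; rewrite /indeg => ->.
Qed.

Lemma conn_leaf_par v x px : x \in leaves E -> E px x -> connect E v x -> v != x ->
  connect E v px.
Proof.
move=> lx hp c ne; have [y' hy cy] := pred_conn c ne.
by rewrite (parent_leaf lx hp hy).
Qed.

Lemma no_sc p s s' : is_reticulation E p -> E s p -> E s' p -> s != s' ->
  connect E s s' -> False.
Proof.
move=> rp hs hs' ne /connectP[P hP eP].
apply: (nsc (u := s) (v := p)); split => //.
exists (rcons P p); split.
  by rewrite /dpath rcons_path hP -eP hs' last_rcons eqxx.
apply/negP => /eqP e.
case: P {hP} eP e => [/= e _|v P _ e]; first by rewrite e eqxx in ne.
by have := f_equal size e; rewrite /= size_rcons.
Qed.

Lemma root_reach v : connect E r v.
Proof.
move: {2}#|[set w | connect E w v]|.+1 (ltnSn #|[set w | connect E w v]|) => n.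
elim: n v => // n IH v lt.
case: (eqVneq v r) => [->|nvr]; first exact: connect0.
have := indeg_pos nvr; move/card_gt0P => [w]; rewrite inE => hw.
have sub : [set t | connect E t w] \proper [set t | connect E t v].
  apply/properP; split.
    apply/subsetP => t; rewrite !inE => ht; exact: connect_trans ht (connect1 hw).
  exists v; rewrite !inE ?connect0 //. apply/negP => hwv. exact: (@arc_back _ _ acyc w v hw hwv).
have lw : #|[set t | connect E t w]| < n by have := proper_card sub; lia.
exact: connect_trans (IH w lw) (connect1 hw).
Qed.

Lemma ret_indeg p : is_reticulation E p -> indeg E p = 2.
Proof. by case/andP => /eqP. Qed.

Lemma ret_outdeg p : is_reticulation E p -> outdeg E p = 1.
Proof. by case/andP => _ /eqP. Qed.

Lemma half a b p : a \in leaves E -> b \in leaves E -> a != b -> E p a ->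
  (exists c, displays_triple E a c b) \/
  (outdeg E p = 2 /\ connect E p b) \/
  (is_reticulation E p /\ forall s, E s p -> connect E s b).
Proof.
move=> la lb nab hpa.
have opos : 0 < outdeg E p by apply/card_gt0P; exists a; rewrite inE.
case: (nonleaf_type opos) => [o2|rp].
- case: (boolP (connect E p b)) => cb; first by right; left.
  left.
  have aS : a \in [set t | E p t] by rewrite inE.
  have [w [hw wa]] := card2_other o2 aS.
  rewrite inE in hw.
  have [c [pc [dc lc]]] := leaf_below acyc w.
  exists c; apply: (display_lemma acyc (r0 := r) (u := p) (p3 := [:: a]) (p4 := w :: pc)) => //.
  + exact: root_reach.
  + exact: root_reach.
  + by rewrite /dpath /= hpa eqxx.
  + by move: dc; rewrite /dpath /= hw.
  + move=> t; rewrite inE => /eqP ->; apply/negP => ain.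
    move: ain; rewrite inE => /predU1P[e|ain]; first by rewrite e eqxx in wa.
    case/andP: dc => hpc _.
    have [y' ym hy] := pred_mem hpc ain.
    rewrite -(parent_leaf la hpa hy) in ym.
    have : path E p (w :: pc) by rewrite /= hw hpc.
    by move/(noloop acyc); rewrite ym.
- case: (boolP [forall s, E s p ==> connect E s b]) => [/forallP h|/forallPn[s]].
    by right; right; split => // s hs; exact: (implyP (h s)).
  rewrite negb_imply => /andP[hs ncb].
  left.
  have nl : ~~ is_leaf E s.
    apply/negP => /andP[_ /eqP o]; move: o; rewrite /outdeg => /eqP; rewrite cards_eq0 => /eqP S.
    have : p \in [set t | E s t] by rewrite inE.
    by rewrite S inE.
  have [t /andP[hst tt]] := tc nl.
  have it : indeg E t = 1 by case/orP: tt => /andP[/eqP ->].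
  have ntp : t != p by apply/eqP => e; move: it; rewrite e ret_indeg.
  have [c [pc [dc lc]]] := leaf_below acyc t.
  case/andP: (dc) => hpc _.
  have pst : path E s (t :: pc) by rewrite /= hst hpc.
  have pn : p \notin t :: pc.
    rewrite inE negb_or eq_sym ntp /=; apply/negP => pin.
    have [y' ym hy] := pred_mem hpc pin.
    case: (eqVneq y' s) => [e|ne].
      by move: (noloop acyc pst); rewrite -e ym.
    have cs : connect E s y' by apply: (conn_mem_first pst); rewrite inE ym orbT.
    by apply: (no_sc rp hs hy _ cs); rewrite eq_sym.
  exists c; apply: (display_lemma acyc (r0 := r) (u := s) (p3 := [:: p; a]) (p4 := t :: pc)) => //.
  + exact: root_reach.
  + exact: root_reach.
  + by rewrite /dpath /= hs hpa eqxx.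
  + by move: dc; rewrite /dpath /= hst.
  + move=> x; rewrite !inE => /orP[/eqP ->|/eqP ->] //.
    apply/negP => /predU1P[e|ain].
      move: hst; rewrite -e => hsa.
      have e' := parent_leaf la hpa hsa.
      by rewrite -e' (no_self acyc) in hs.
    have [y' ym hy] := pred_mem hpc ain.
    by rewrite -(parent_leaf la hpa hy) in ym; rewrite ym in pn.
Qed.

Lemma case_22 a b p q : a \in leaves E -> b \in leaves E -> E p a -> E q b ->
  connect E p b -> connect E q a -> p = q.
Proof.
move=> la lb hpa hqb cpb cqa.
have c1 := conn_leaf_par lb hqb cpb (neq_leaf hpa lb).
have c2 := conn_leaf_par la hpa cqa (neq_leaf hqb la).
exact: (@conn_antisym _ _ acyc _ _) c1 c2.
Qed.

Lemma case_mixed a b p q : a \in leaves E -> b \in leaves E -> E p a -> E q b ->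
  is_reticulation E p -> (forall s, E s p -> connect E s b) -> connect E q a -> p = q.
Proof.
move=> la lb hpa hqb rp hs cqa.
case: (eqVneq q p) => [->//|nqp].
have cqp := conn_leaf_par la hpa cqa (neq_leaf hqb la).
have [s hsp cqs] := pred_conn cqp nqp.
have csq : connect E s q := conn_leaf_par lb hqb (hs _ hsp) (neq_leaf hsp lb).
have esq := (@conn_antisym _ _ acyc _ _) csq cqs.
have pS : s \in [set u | E u p] by rewrite inE.
have [s' [hs' ns']] := card2_other (ret_indeg rp) pS.
rewrite inE in hs'.
have cs'q : connect E s' q := conn_leaf_par lb hqb (hs _ hs') (neq_leaf hs' lb).
rewrite -esq in cs'q.
by case: (no_sc rp hs' hsp ns' cs'q).
Qed.

Lemma case_ret a b p q : a \in leaves E -> b \in leaves E -> E p a -> E q b ->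
  is_reticulation E p -> is_reticulation E q ->
  (forall s, E s p -> connect E s b) -> (forall s, E s q -> connect E s a) ->
  p != q -> False.
Proof.
move=> la lb hpa hqb rp rq hp hq npq.
have := ret_indeg rp => ip.
have [s1] : exists s1, s1 \in [set u | E u p] by apply/card_gt0P; move: ip; rewrite /indeg => ->.
rewrite inE => h1.
have c1 : connect E s1 q := conn_leaf_par lb hqb (hp _ h1) (neq_leaf h1 lb).
have ns1q : s1 != q.
  apply/eqP => e; rewrite e in h1.
  have o1 : #|[set w | E q w]| <= 1 by have := ret_outdeg rq; rewrite /outdeg => ->.
  have e' := @card_le1_eq _ _ p b o1 (_ : p \in _) (_ : b \in _).
  rewrite !inE in e'; have {}e' := e' h1 hqb.
  by move: (neq_leaf hpa lb); rewrite e' eqxx.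
have [r1 hr1 c2] := pred_conn c1 ns1q.
have c3 : connect E r1 p := conn_leaf_par la hpa (hq _ hr1) (neq_leaf hr1 la).
have nr1p : r1 != p.
  apply/eqP => e; rewrite e in hr1.
  have o1 : #|[set w | E p w]| <= 1 by have := ret_outdeg rp; rewrite /outdeg => ->.
  have e' := @card_le1_eq _ _ q a o1 (_ : q \in _) (_ : a \in _).
  rewrite !inE in e'; have {}e' := e' hr1 hpa.
  by move: (neq_leaf hqb la); rewrite e' eqxx.
have [s hs c4] := pred_conn c3 nr1p.
case: (eqVneq s1 s) => [es|ne]; last first.
  by apply: (no_sc rp h1 hs ne); exact: connect_trans c2 c4.
rewrite -es in c4 hs.
have er := (@conn_antisym _ _ acyc _ _) c2 c4.
rewrite -er in hr1.
have nl : ~~ is_leaf E s1.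
  apply/negP => /andP[_ /eqP o]; move: o; rewrite /outdeg => /eqP; rewrite cards_eq0 => /eqP S.
  have : p \in [set t | E s1 t] by rewrite inE.
  by rewrite S inE.
have [w /andP[hw tw]] := tc nl.
have iw : indeg E w = 1 by case/orP: tw => /andP[/eqP ->].
have nwp : p != w by apply/eqP => e; move: iw; rewrite -e ret_indeg.
have nwq : q != w by apply/eqP => e; move: iw; rewrite -e ret_indeg.
apply: (@card_le2_3 _ [set t | E s1 t] p q w (outdeg_le2 s1)); rewrite ?inE //.
Qed.

Lemma fwd_one a b p x y z : a \in leaves E -> E p a -> E p b ->
  displays_triple E x y z -> z = a -> (b = x \/ b = y) -> False.
Proof.
move=> la hpa hpb [[lx ly lz _] [r' [u [p1 [p2 [p3 [p4 H]]]]]]] ez bxy.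
case: H => [[d1 d2 d3 d4] [[n1 n2 n3 n4] [_ [_ [_ [_ [D3 D4]]]]]]].
case/andP: d2 => h2 /eqP e2.
have [y' ym hy] := pred_last h2 n2.
rewrite e2 ez in hy.
rewrite -(parent_leaf la hpa hy) in ym.
have lb : b \in leaves E.
  by case: bxy => ->.
case: bxy => eb.
- case/andP: d3 => h3 /eqP e3.
  have [y'' ym' hy'] := pred_last h3 n3.
  rewrite e3 -eb in hy'.
  rewrite -(parent_leaf lb hpb hy') in ym'.
  by move: (D3 _ ym); rewrite ym'.
- case/andP: d4 => h4 /eqP e4.
  have [y'' ym' hy'] := pred_last h4 n4.
  rewrite e4 -eb in hy'.
  rewrite -(parent_leaf lb hpb hy') in ym'.
  by move: (D4 _ ym); rewrite ym'.
Qed.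

Lemma lemma2_sec a b :
  a \in leaves E -> b \in leaves E -> a != b ->
  (cherry E a b <->
   (forall x y z : V, displays_triple E x y z ->
      a \in [:: x; y; z] -> b \in [:: x; y; z] ->
      (a = x /\ b = y) \/ (a = y /\ b = x))).
Proof.
move=> la lb nab.
have [p] : exists p, p \in [set u | E u a].
  by apply/card_gt0P; move: (leaf_indeg la); rewrite /indeg => ->.
rewrite inE => hpa.
have [q] : exists q, q \in [set u | E u b].
  by apply/card_gt0P; move: (leaf_indeg lb); rewrite /indeg => ->.
rewrite inE => hqb.
split.
- case=> p' /andP[hpa' hpb'] x y z dt.
  rewrite !inE => ha hb.
  have nba : b != a by rewrite eq_sym.
  case/or3P: ha => /eqP ea; case/or3P: hb => /eqP eb.
  + by move: nab; rewrite ea eb eqxx.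
  + by left.
  + by case: (fwd_one lb hpb' hpa' dt (esym eb) (or_introl ea)).
  + by right.
  + by move: nab; rewrite ea eb eqxx.
  + by case: (fwd_one lb hpb' hpa' dt (esym eb) (or_intror ea)).
  + by case: (fwd_one la hpa' hpb' dt (esym ea) (or_introl eb)).
  + by case: (fwd_one la hpa' hpb' dt (esym ea) (or_intror eb)).
  + by move: nab; rewrite ea eb eqxx.
- move=> H.
  case: (eqVneq p q) => [epq|npq]; first by exists p; rewrite hpa epq hqb.
  exfalso.
  have nba : b != a by rewrite eq_sym.
  have [[c dt]|[[o1 cpb]|[rp hp]]] := half la lb nab hpa.
    have [_ _ _ [nac _ ncb]] : [/\ a \in leaves E, c \in leaves E, b \in leaves E & [/\ a != c, a != b & c != b]] by case: dt.
    have := H a c b dt; rewrite !inE !eqxx !orbT => /(_ isT isT) [[_ e]|[e _]].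
    - by move: ncb; rewrite e eqxx.
    - by move: nac; rewrite e eqxx.
  all: have [[c dt]|[[o2 cqa]|[rq hq]]] := half lb la nba hqb.
  all: try (have [_ _ _ [nbc _ nca]] : [/\ b \in leaves E, c \in leaves E, a \in leaves E & [/\ b != c, b != a & c != a]] by case: dt).
  all: try (have := H b c a dt; rewrite !inE !eqxx !orbT => /(_ isT isT) [[e _]|[e _]]; [by move: nab; rewrite e eqxx | by move: nca; rewrite e eqxx]).
  - by move: npq; rewrite (case_22 la lb hpa hqb cpb cqa) eqxx.
  - by move: npq; rewrite (case_mixed lb la hqb hpa rq hq cpb) eqxx.
  - by move: npq; rewrite (case_mixed la lb hpa hqb rp hp cqa) eqxx.
  - exact: (case_ret la lb hpa hqb rp rq hp hq npq).
Qed.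


End Main.

Theorem lemma2 (V : finType) (E : rel V) (a b : V) :
  normal_network E ->
  3 <= #|leaves E| ->
  a \in leaves E -> b \in leaves E -> a != b ->
  (cherry E a b <->
   (forall x y z : V, displays_triple E x y z ->
      a \in [:: x; y; z] -> b \in [:: x; y; z] ->
      (a = x /\ b = y) \/ (a = y /\ b = x))).
Proof.
move=> [[acyc [r [rootr cls]]] [tc nsc]] _.
exact: (@lemma2_sec V E acyc r rootr cls tc nsc a b).
Qed.
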